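(* Let $n\ge2$, let $m\ge 3$ be odd, and let $\mathcal{A}$ be an $m$th order $n$-dimensional complete Hankel tensor which has at least one H-eigenvalue. Then all H-eigenvalues of $\mathcal{A}$ are nonnegative. Moreover, if $\lambda$ is an H-eigenvalue of $\mathcal{A}$ with H-eigenvector $x=(x_1,\dots,x_n)^\top$, then either $\lambda=0$, or $\lambda>0$ and $x_1\neq 0$.
   Context: A complete Hankel tensor is a tensor of the form $\mathcal{A}=\sum_{k=1}^r\alpha_k(u_k)^m$ with $\alpha_k>0$, $u_k=(1,u_k,u_k^2,\dots,u_k^{n-1})^\top$ for pairwise distinct reals $u_1,\dots,u_r$, where $w^m$ denotes the tensor with entries $w_{i_1}\cdots w_{i_m}$. For a symmetric tensor $\mathcal{A}=(a_{i_1\cdots i_m})$ and $x\in\mathbb{C}^n$, $\mathcal{A}x^{m-1}$ is the vector with $i$th component $\sum_{i_2,\dots,i_m=1}^n a_{ii_2\cdots i_m}x_{i_2}\cdots x_{i_m}$, and $x^{[m-1]}$ is the vector with $i$th component $x_i^{m-1}$. A real number $\lambda$ is an H-eigenvalue of $\mathcal{A}$ with H-eigenvector $x$ if $x\in\mathbb{R}^n\setminus\{0\}$ and $\mathcal{A}x^{m-1}=\lambda x^{[m-1]}$. *)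

(* Defs.v *)
From mathcomp Require Import all_boot all_order all_algebra.
From mathcomp Require Import reals.
Set Implicit Arguments. Unset Strict Implicit. Unset Printing Implicit Defensive.
Import Order.TTheory GRing.Theory Num.Theory.
Local Open Scope ring_scope.

(* An m-th order n-dimensional real tensor: entries indexed by
   (i_1,...,i_m) encoded as f : {ffun 'I_m -> 'I_n}; i_{j+1} = f j,
   indices 0-based (so i = 0 corresponds to the paper's index 1). *)
Definition tensor (R : Type) (m n : nat) := {ffun 'I_m -> 'I_n} -> R.

Definition tmul (R : realType) (m n : nat) (A : tensor R m n)
  (x : 'I_n -> R) (i : 'I_n) : R :=
  \sum_(f : {ffun 'I_m -> 'I_n} | [forall j : 'I_m, (val j == 0%N) ==> (f j == i)])
     A f * \prod_(j : 'I_m | val j != 0%N) x (f j).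

(* Complete Hankel tensor: A = sum_{k} alpha_k (u_k)^m with alpha_k > 0,
   u_k = (1, u_k, ..., u_k^{n-1}), pairwise distinct u_k. The entry of
   (u_k)^m at (i_1..i_m) is prod_j u_k^{i_j} (0-based exponents). *)
Definition complete_hankel (R : realType) (m n : nat) (A : tensor R m n) : Prop :=
  exists (r : nat) (alpha : 'I_r -> R) (u : 'I_r -> R),
    (forall k, 0 < alpha k) /\ injective u /\
    forall f : {ffun 'I_m -> 'I_n},
      A f = \sum_(k < r) alpha k * \prod_(j < m) u k ^+ (val (f j)).

Definition H_eigenpair (R : realType) (m n : nat) (A : tensor R m n)
  (lambda : R) (x : 'I_n -> R) : Prop :=
  (exists i, x i != 0) /\ forall i, tmul A x i = lambda * x i ^+ m.-1.

Definition is_H_eigenvalue (R : realType) (m n : nat) (A : tensor R m n) (lambda : R) :=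
  exists x, H_eigenpair A lambda x.

(* Main.v *)
Require Import Defs.
From mathcomp Require Import all_boot all_order all_algebra.
From mathcomp Require Import reals.
Import Order.TTheory GRing.Theory Num.Theory.
Local Open Scope ring_scope.

Lemma key_sum (R : realType) (m n : nat) (j0 : 'I_m) (hj0 : val j0 = 0%N)
  (i : 'I_n) (v : R) (x : 'I_n -> R) :
  \sum_(f : {ffun 'I_m -> 'I_n} | [forall j : 'I_m, (val j == 0%N) ==> (f j == i)])
     (\prod_(j < m) v ^+ (val (f j))) * \prod_(j : 'I_m | val j != 0%N) x (f j)
  = v ^+ i * (\sum_(l < n) v ^+ l * x l) ^+ m.-1.
Proof.
pose F (j : 'I_m) (l : 'I_n) : R :=
  if j == j0 then (l == i)%:R * v ^+ l else v ^+ l * x l.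
have hP : forall f : {ffun 'I_m -> 'I_n},
    [forall j : 'I_m, (val j == 0%N) ==> (f j == i)] = (f j0 == i).
  move=> f; apply/forallP/idP => [H|/eqP H j].
    by have := H j0; rewrite hj0 eqxx.
  apply/implyP => /eqP hj; have -> : j = j0 by apply: val_inj; rewrite /= hj hj0.
  by rewrite H.
have hj : forall j : 'I_m, (val j != 0%N) = (j != j0).
  by move=> j; rewrite -(inj_eq val_inj) hj0.
transitivity (\prod_(j < m) \sum_(l < n) F j l); last first.
  rewrite (bigD1 j0) //= {1}/F eqxx.
  rewrite (bigD1 i) //= eqxx mul1r big1 ?addr0; last first.
    by move=> l /negbTE ->; rewrite mul0r.
  congr (_ * _).
  rewrite (eq_bigr (fun _ => \sum_(l < n) v ^+ l * x l)); last first.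
    by move=> j /negbTE hjj; apply: eq_bigr => l _; rewrite /F hjj.
  rewrite prodr_const; congr (_ ^+ _).
  by rewrite cardC1 card_ord.
rewrite bigA_distr_bigA /= big_mkcond /=.
apply: eq_bigr => f _.
rewrite hP [in LHS](bigD1 j0) //= [in RHS](bigD1 j0) //= {1}/F eqxx.
rewrite (eq_bigl (fun j => j != j0) (P1 := fun j : 'I_m => val j != 0%N)); last by move=> j; rewrite hj.
case: eqP => [-> | _]; last by rewrite !mul0r.
rewrite !mul1r -mulrA; congr (_ * _).
rewrite -big_split /=; apply: eq_bigr => j /negbTE hjj.
by rewrite /F hjj.
Qed.

Lemma tmul_hankel (R : realType) (m n r : nat) (A : tensor R m n)
  (alpha u : 'I_r -> R) (j0 : 'I_m) (hj0 : val j0 = 0%N)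
  (hA : forall f : {ffun 'I_m -> 'I_n},
      A f = \sum_(k < r) alpha k * \prod_(j < m) u k ^+ (val (f j)))
  (x : 'I_n -> R) (i : 'I_n) :
  tmul A x i = \sum_(k < r) alpha k *
     (u k ^+ i * (\sum_(l < n) u k ^+ l * x l) ^+ m.-1).
Proof.
rewrite /tmul.
under eq_bigr => f _ do rewrite hA big_distrl /=.
rewrite exchange_big /=; apply: eq_bigr => k _.
rewrite -(@key_sum _ _ _ _ hj0) big_distrr /=; apply: eq_bigr => f _.
by rewrite mulrA.
Qed.

Theorem proposition4 (R : realType) (n m : nat) (A : tensor R m n) :
  (2 <= n)%N -> (3 <= m)%N -> odd m -> complete_hankel A ->
  (exists lambda : R, is_H_eigenvalue A lambda) ->
  (forall lambda : R, is_H_eigenvalue A lambda -> 0 <= lambda) /\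
  (forall (lambda : R) (x : 'I_n -> R), H_eigenpair A lambda x ->
     lambda = 0 \/ (0 < lambda /\ forall i : 'I_n, val i = 0%N -> x i != 0)).
Proof.
move=> hn hm hodd [r [alpha [u [hal [_ hA]]]]] _.
have hm0 : (0 < m)%N by apply: leq_trans hm.
have hn0 : (0 < n)%N by apply: leq_trans hn.
pose j0 : 'I_m := Ordinal hm0.
pose i0 : 'I_n := Ordinal hn0.
have hev : ~~ odd m.-1 by move: hodd; case: (m) => //= m' ->.
have main : forall (lambda : R) (x : 'I_n -> R), H_eigenpair A lambda x ->
     lambda = 0 \/ (0 < lambda /\ forall i : 'I_n, val i = 0%N -> x i != 0).
  move=> lambda x [[i1 hi1] heig].
  have T := @tmul_hankel _ _ _ _ A alpha u j0 erefl hA x.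
  have h0 : \sum_(k < r) alpha k * (1 * (\sum_(l < n) u k ^+ l * x l) ^+ m.-1)
      = lambda * x i0 ^+ m.-1.
    by rewrite -heig T; apply: eq_bigr => k _; rewrite expr0.
  have hge : forall k, 0 <= alpha k * (1 * (\sum_(l < n) u k ^+ l * x l) ^+ m.-1).
    by move=> k; rewrite mul1r; apply: mulr_ge0; [exact: ltW | exact: exprn_even_ge0].
  have hS : 0 <= \sum_(k < r) alpha k * (1 * (\sum_(l < n) u k ^+ l * x l) ^+ m.-1).
    by apply: sumr_ge0 => k _; apply: hge.
  case: (eqVneq (x i0) 0) => hx0.
    left.
    rewrite hx0 expr0n /= (_ : m.-1 == 0%N = false) ?mulr0 in h0; last first.
      by case: (m) hm => // [[|[|]]].
    have hz := psumr_eq0P (fun k _ => hge k) h0.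
    have := heig i1; rewrite T big1; last first.
      move=> k _; have := hz k isT; rewrite mul1r => /eqP.
      rewrite mulf_eq0 (gt_eqF (hal k)) /= => /eqP ->.
      by rewrite !mulr0.
    move/esym/eqP; rewrite mulf_eq0 expf_eq0 (negbTE hi1) andbF orbF.
    by move/eqP.
  have hxp : 0 < x i0 ^+ m.-1 by rewrite exprn_even_gt0 // hx0 orbT.
  have hl : 0 <= lambda.
    by rewrite -(pmulr_lge0 _ hxp) -h0.
  case: (eqVneq lambda 0) => hl0; first by left.
  right; split; first by rewrite lt_def hl0 hl.
  move=> i hi; have -> : i = i0 by apply: val_inj.
  exact: hx0.
split => // lambda [x hx].
by case: (main _ _ hx) => [->|[/ltW]].
Qed.
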